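(* Let $B$ be the infinite complete binary tree, i.e. the rooted tree starting from a single root vertex in which every vertex has exactly two children. Then $\chi_{td}(B) = 7$.
   Context: For a (possibly infinite) simple graph $G$ and a positive integer $k$, a proper $k$-total difference labeling of $G$ is a function $f: V(G)\to\{1,\dots,k\}$, extended to edges by $f(\{u,v\}) = |f(u)-f(v)|$, such that: (i) adjacent vertices receive different labels; (ii) two distinct edges sharing a vertex receive different labels; (iii) no edge receives the same label as either of its endpoints. $\chi_{td}(G)$ denotes the smallest $k$ for which $G$ has a proper $k$-total difference labeling. *)

(* Defs.v *)
From mathcomp Require Import all_boot.
Set Implicit Arguments. Unset Strict Implicit. Unset Printing Implicit Defensive.

Definition absdiff (a b : nat) : nat := maxn a b - minn a b.

Definition proper_td_labeling (V : Type) (adj : V -> V -> Prop) (k : nat)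
  (f : V -> nat) : Prop :=
  (forall v, 1 <= f v <= k) /\
  (forall u v, adj u v -> f u <> f v) /\
  (forall u v w, adj u v -> adj u w -> v <> w ->
     absdiff (f u) (f v) <> absdiff (f u) (f w)) /\
  (forall u v, adj u v ->
     absdiff (f u) (f v) <> f u /\ absdiff (f u) (f v) <> f v).

Definition has_proper_td_labeling (V : Type) (adj : V -> V -> Prop) (k : nat) :=
  exists f : V -> nat, proper_td_labeling adj k f.

Definition chi_td_is (V : Type) (adj : V -> V -> Prop) (n : nat) : Prop :=
  has_proper_td_labeling adj n /\
  (forall k, has_proper_td_labeling adj k -> n <= k).

(* The infinite complete binary tree: vertices are finite bit strings
   (the path from the root [::]); the children of s are true :: s and false :: s. *)
Definition btree_adj (u v : seq bool) : Prop :=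
  (exists b : bool, v = b :: u) \/ (exists b : bool, u = b :: v).

(* Main.v *)
Require Import Defs.
From mathcomp Require Import all_boot.
From mathcomp Require Import zify.

Set Implicit Arguments. Unset Strict Implicit. Unset Printing Implicit Defensive.

Definition nbok (u x : nat) : bool :=
  [&& x != u, absdiff u x != u & absdiff u x != x].

Definition local_ok (k p u c1 c2 : nat) : bool :=
  [&& (0 < u <= k) && (0 < c1 <= k), (0 < c2 <= k) && (p <= k),
      nbok u c1 && nbok u c2,
      absdiff u c1 != absdiff u c2 &
      (p == 0) || [&& nbok u p, absdiff u p != absdiff u c1 & absdiff u p != absdiff u c2]].

Definition pv (f : seq bool -> nat) (s : seq bool) : nat :=
  if s is _ :: t then f t else 0.

Lemma local_proper k f :
  (forall s, local_ok k (pv f s) (f s) (f (true :: s)) (f (false :: s))) ->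
  proper_td_labeling btree_adj k f.
Proof.
have pos : (forall s, local_ok k (pv f s) (f s) (f (true :: s)) (f (false :: s))) ->
   forall s, 0 < f s.
  by move=> H s; move: (H s) => /and5P [/andP [/andP [] ]].
move=> H; have P := pos H.
have Hp : forall b t, [&& nbok (f (b :: t)) (f t),
     absdiff (f (b::t)) (f t) != absdiff (f (b::t)) (f (true :: b :: t)) &
     absdiff (f (b::t)) (f t) != absdiff (f (b::t)) (f (false :: b :: t))].
  move=> b t; move: (H (b :: t)) => /and5P [_ _ _ _] /=.
  by case: (f t) (P t) => //.
have Hc : forall b s, nbok (f s) (f (b :: s)).
  move=> b s; move: (H s) => /and5P [_ _ /andP [h1 h2] _ _]; by case: b.
split; [|split; [|split]].
- move=> v; move: (H v) => /and5P [/andP [/andP [-> ->] _] _ _ _ _] //.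
- move=> u v [[b ->]|[b ->]].
  + by move: (Hc b u) => /and3P [/eqP h _ _] e; apply: h.
  + by move: (Hp b v) => /and3P [/and3P [/eqP h _ _] _ _] e; apply: h.
- move=> u v w [[b ->]|[b ->]] [[b' ->]|[b' Ew]] nvw.
  + move: (H u) => /and5P [_ _ _ /eqP h _].
    move: nvw; case: b; case: b' => nvw e;
      first [by case: nvw | by apply: h | by apply: h; rewrite e].
  + clear nvw; subst u; move: (Hp b' w) => /and3P [_ /eqP h1 /eqP h2].
    by case: b => e; [apply: h1|apply: h2]; rewrite e.
  + clear nvw; move: (Hp b v) => /and3P [_ /eqP h1 /eqP h2].
    by case: b' => e; [apply: h1|apply: h2]; rewrite e.
  + by case: Ew => _ E; subst w.
- move=> u v [[b ->]|[b ->]].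
  + by move: (Hc b u) => /and3P [_ /eqP h1 /eqP h2].
  + by move: (Hp b v) => /and3P [/and3P [_ /eqP h1 /eqP h2] _ _].
Qed.

Lemma proper_local k f : proper_td_labeling btree_adj k f ->
  forall s, local_ok k (pv f s) (f s) (f (true :: s)) (f (false :: s)).
Proof.
move=> [Hb [H1 [H2 H3]]] s.
have nb : forall u v, btree_adj u v -> nbok (f u) (f v).
  move=> u v a; rewrite /nbok; have := H3 _ _ a; case=> [h1 h2].
  apply/and3P; split; apply/eqP; [by move=> e; apply: (H1 _ _ a); rewrite e | exact h1 | exact h2].
have ac : forall b, btree_adj s (b :: s) by move=> b; left; exists b.
rewrite /local_ok.
have /andP [-> ->] := Hb s.
have /andP [-> ->] := Hb (true :: s).
have /andP [-> ->] := Hb (false :: s).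
rewrite !nb //=.
have -> : absdiff (f s) (f (true :: s)) != absdiff (f s) (f (false :: s)).
  by apply/eqP; apply: H2.
case: s Hb H1 H2 H3 nb ac => [|b t] Hb H1 H2 H3 nb ac //=.
have ap : btree_adj (b :: t) t by right; exists b.
have /andP [_ ->] := Hb t; rewrite nb //=.
apply/orP; right; apply/andP; split; apply/eqP; apply: H2 => // E; have := congr1 size E => /=; lia.
Qed.

Definition pairs (k : nat) := [seq (a, b) | a <- iota 1 k, b <- iota 1 k].
Definition states (k : nat) := [seq (p, u) | p <- iota 0 k.+1, u <- iota 1 k].
Definition step (k : nat) (F : seq (nat * nat)) :=
  [seq st <- F | has (fun c => local_ok k st.1 st.2 c.1 c.2 && ((st.2, c.1) \in F)
                       && ((st.2, c.2) \in F)) (pairs k)].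
Definition iterF k d := iter d (step k) (states k).

Lemma lower_inv f : proper_td_labeling btree_adj 6 f ->
  forall d s, (pv f s, f s) \in iterF 6 d.
Proof.
move=> Hf; have L := proper_local Hf; case: Hf => [Hb _].
have pvb : forall s, pv f s < 7.
  by case=> [|b t] //=; have /andP [_ h] := Hb t; lia.
elim=> [|d IH] s.
  rewrite /iterF /=; apply: allpairs_f; rewrite mem_iota.
    by have := pvb s; lia.
  by have /andP [h1 h2] := Hb s; lia.
rewrite /iterF iterS -/(iterF 6 d) /step mem_filter; apply/andP; split; last exact: IH.
apply/hasP; exists (f (true :: s), f (false :: s)).
  apply: allpairs_f; rewrite mem_iota.
    by have /andP [h1 h2] := Hb (true :: s); lia.
  by have /andP [h1 h2] := Hb (false :: s); lia.
by apply/andP; split; [apply/andP; split|]; [exact: L|exact: (IH (true :: s))|exact: (IH (false :: s))].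
Qed.

Lemma lower k f : proper_td_labeling btree_adj k f -> 7 <= k.
Proof.
move=> Hf; case: (leqP 7 k) => // hk.
have Hf6 : proper_td_labeling btree_adj 6 f.
  case: Hf => [Hb R]; split=> // v; have /andP [h1 h2] := Hb v; lia.
have := lower_inv Hf6 7 [::].
by have -> : iterF 6 7 = [::] by vm_compute.
Qed.

Definition S7 := iterF 7 1.
Definition choose (p u : nat) : nat * nat :=
  head (0, 0) [seq c <- pairs 7 | local_ok 7 p u c.1 c.2 && ((u, c.1) \in S7)
                                  && ((u, c.2) \in S7)].
Fixpoint g (s : seq bool) : nat * nat :=
  match s with
  | [::] => (0, 1)
  | b :: t => let st := g t in let c := choose st.1 st.2 in
              (st.2, if b then c.1 else c.2)
  end.
Definition f7 s := (g s).2.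

Lemma S7_check : all (fun st => let c := choose st.1 st.2 in
   [&& local_ok 7 st.1 st.2 c.1 c.2, (st.2, c.1) \in S7 & (st.2, c.2) \in S7]) S7.
Proof. by vm_compute. Qed.

Lemma g_inv s : g s \in S7.
Proof.
elim: s => [|b t IH]; first by vm_compute.
have /and3P [_ h1 h2] := allP S7_check _ IH.
by case: b.
Qed.

Lemma upper : proper_td_labeling btree_adj 7 f7.
Proof.
apply: local_proper => s.
have E : pv f7 s = (g s).1 by case: s.
rewrite E; have /and3P [h _ _] := allP S7_check _ (g_inv s).
exact: h.
Qed.

Theorem mainTheorem6 : chi_td_is btree_adj 7.
Proof.
split; first by exists f7; exact: upper.
by move=> k [f Hf]; exact: lower Hf.
Qed.
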